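(* Let $C<\infty$, let $(z_i)$ be a bimonotone basis of a Banach space, and let $(w_i)$ be a block basis of $(z_i)$ with $1\le\|w_i\|\le C$ for all $i$. Let $\mathcal{A}$ be the family of finite sets $F\subseteq\mathbb{N}$ such that $\|\sum_{i\in F}\pm w_i\|\le C$ for all choices of signs. Then there is a norm $|\cdot|$ on $[(w_i)]$ equivalent to the original norm such that $(w_i)$ is a normalized bimonotone basis for $|\cdot|$ and $|\sum_{i\in F}\pm w_i|=1$ for every $F\in\mathcal{A}$ and every choice of signs.
   Context: A basis is bimonotone if all its basis projections $P_{[m,n]}$ onto intervals of coordinates have norm at most $1$. $[(w_i)]$ denotes the closed linear span. *)

(* Defs.v *)
From HB Require Import structures.
From mathcomp Require Import all_boot all_order all_algebra.
From mathcomp Require Import finmap.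
From mathcomp Require Import all_classical all_reals all_analysis.
Set Implicit Arguments. Unset Strict Implicit. Unset Printing Implicit Defensive.
Import Order.TTheory GRing.Theory Num.Theory.
Import numFieldNormedType.Exports.
Local Open Scope classical_set_scope.
Local Open Scope ring_scope.

Definition series_to {R : realType} {V : normedModType R}
  (a : nat -> R) (z : nat -> V) (x : V) : Prop :=
  (fun n : nat => \sum_(i < n) a i *: z i) @ \oo --> x.

Definition is_basis {R : realType} {V : normedModType R} (z : nat -> V) : Prop :=
  forall x : V, exists! a : nat -> R, series_to a z x.

Definition bimonotone {R : realType} {V : normedModType R} (z : nat -> V) : Prop :=
  forall (x : V) (a : nat -> R), series_to a z x ->
  forall m n : nat, (m <= n)%N ->
    `| \sum_(m <= i < n.+1) a i *: z i | <= `|x|.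

Definition block_basis_of {R : realType} {V : normedModType R}
  (w z : nat -> V) : Prop :=
  exists (p : nat -> nat) (b : nat -> R),
    (forall i, (p i < p i.+1)%N) /\
    (forall i, w i = \sum_(p i <= j < p i.+1) b j *: z j) /\
    (forall i, w i != 0).

Definition closed_span {R : realType} {V : normedModType R} (w : nat -> V) : set V :=
  closure [set x | exists (n : nat) (a : nat -> R), x = \sum_(i < n) a i *: w i].

Definition signed_sum {R : realType} {V : normedModType R}
  (w : nat -> V) (F : {fset nat}) (s : nat -> bool) : V :=
  \sum_(i <- F) ((-1) ^+ s i : R) *: w i.

Definition is_norm_on {R : realType} {V : normedModType R}
  (W : set V) (N : V -> R) : Prop :=
  (forall x, W x -> 0 <= N x) /\
  (forall x, W x -> N x = 0 -> x = 0) /\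
  (forall x y, W x -> W y -> N (x + y) <= N x + N y) /\
  (forall (c : R) x, W x -> N (c *: x) = `|c| * N x).

Definition equiv_norm_on {R : realType} {V : normedModType R}
  (W : set V) (N : V -> R) : Prop :=
  exists c1 c2 : R, 0 < c1 /\ 0 < c2 /\
    forall x, W x -> c1 * `|x| <= N x /\ N x <= c2 * `|x|.

Definition series_to_N {R : realType} {V : normedModType R} (N : V -> R)
  (a : nat -> R) (z : nat -> V) (x : V) : Prop :=
  (fun n : nat => N (x - \sum_(i < n) a i *: z i)) @ \oo --> (0 : R).

(* Main.v *)
Require Import Defs.
From HB Require Import structures.
From mathcomp Require Import all_boot all_order all_algebra.
From mathcomp Require Import finmap.
From mathcomp Require Import all_classical all_reals all_analysis.
Import Order.TTheory GRing.Theory Num.Theory.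
Import numFieldNormedType.Exports.
Local Open Scope classical_set_scope.
Local Open Scope ring_scope.

Definition coef {R : realType} {V : normedModType R} {z : nat -> V}
  (hz : is_basis z) (x : V) : nat -> R := proj1_sig (cid (hz x)).

Lemma coefP {R : realType} {V : normedModType R} {z : nat -> V}
  (hz : is_basis z) x : series_to (coef hz x) z x.
Proof. by rewrite /coef; exact: (proj2_sig (cid (hz x))).1. Qed.

Lemma coef_uniq {R : realType} {V : normedModType R} {z : nat -> V}
  (hz : is_basis z) x a : series_to a z x -> coef hz x = a.
Proof. by move=> h; rewrite /coef; exact: (proj2_sig (cid (hz x))).2 a h. Qed.

Lemma series_lin {R : realType} {V : normedModType R} (z : nat -> V)
  (a a' : nat -> R) x y c :
  series_to a z x -> series_to a' z y ->
  series_to (fun i => c * a i + a' i) z (c *: x + y).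
Proof.
move=> hx hy; rewrite /series_to.
have -> : (fun n : nat => \sum_(i < n) (c * a i + a' i) *: z i) =
  (fun n => c *: (\sum_(i < n) a i *: z i) + \sum_(i < n) a' i *: z i).
  apply: funext => n; rewrite scaler_sumr -big_split /=.
  by apply: eq_bigr => i _; rewrite scalerDl scalerA.
apply: cvgD => //; apply: cvgZ => //; exact: cvg_cst.
Qed.

Lemma coefL {R : realType} {V : normedModType R} {z : nat -> V}
  (hz : is_basis z) c x y :
  coef hz (c *: x + y) = (fun i => c * coef hz x i + coef hz y i).
Proof. apply: coef_uniq; apply: series_lin; exact: coefP. Qed.

Lemma sum_widen {R : realType} {V : normedModType R} (z : nat -> V)
  (c : nat -> R) n K : (n <= K)%N ->
  \sum_(j < n) c j *: z j = \sum_(j < K) (if (j < n)%N then c j else 0) *: z j.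
Proof.
move=> hK; rewrite (big_ord_widen K (fun j => c j *: z j)) // big_mkcond.
by apply: eq_bigr => j _; case: ifP => _; rewrite ?scale0r.
Qed.

Lemma series_fin {R : realType} {V : normedModType R} (z : nat -> V)
  (c : nat -> R) n :
  series_to (fun j => if (j < n)%N then c j else 0) z (\sum_(j < n) c j *: z j).
Proof.
apply/cvgrPdist_lt => e e0; exists n => // k /= hk.
by rewrite -sum_widen // subrr normr0.
Qed.

Lemma coef_fin {R : realType} {V : normedModType R} {z : nat -> V}
  (hz : is_basis z) (c : nat -> R) n :
  coef hz (\sum_(j < n) c j *: z j) = (fun j => if (j < n)%N then c j else 0).
Proof. apply: coef_uniq; exact: series_fin. Qed.

Lemma z_neq0 {R : realType} {V : normedModType R} {z : nat -> V}
  (hz : is_basis z) j : z j != 0.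
Proof.
apply/negP => /eqP hj.
have h1 : series_to (fun _ => 0) z (0 : V).
  by apply/cvgrPdist_lt => e e0; exists 0%N => // k _ /=;
   rewrite big1 ?subrr ?normr0 // => i _; rewrite scale0r.
have h2 : series_to (fun i => if i == j then 1 else 0) z (0 : V).
  apply/cvgrPdist_lt => e e0; exists 0%N => // k _ /=.
  rewrite big1 ?subrr ?normr0 // => i _.
  by case: eqP => [->|_]; rewrite ?hj ?scaler0 ?scale0r.
have := coef_uniq hz _ _ h2; rewrite (coef_uniq hz _ _ h1) => /(congr1 (fun f => f j)).
by rewrite eqxx => /eqP; rewrite eq_sym oner_eq0.
Qed.
From mathcomp Require Import zify ring.

Definition Pm {R : realType} {V : normedModType R} {z : nat -> V}
  (hz : is_basis z) (m n : nat) (x : V) : V :=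
  \sum_(j < n) (if (m <= j)%N then coef hz x j else 0) *: z j.

Lemma coef_P {R : realType} {V : normedModType R} {z : nat -> V}
  (hz : is_basis z) m n x :
  coef hz (Pm hz m n x) =
  (fun j => if (j < n)%N then (if (m <= j)%N then coef hz x j else 0) else 0).
Proof. exact: coef_fin. Qed.

Lemma P_lin {R : realType} {V : normedModType R} {z : nat -> V}
  (hz : is_basis z) m n c x y :
  Pm hz m n (c *: x + y) = c *: Pm hz m n x + Pm hz m n y.
Proof.
rewrite /Pm coefL scaler_sumr -big_split /=; apply: eq_bigr => j _.
by case: ifP => _; rewrite ?scalerDl ?scalerA // mulr0 !scale0r addr0.
Qed.

Lemma P_widen {R : realType} {V : normedModType R} {z : nat -> V}
  (hz : is_basis z) m n x K : (n <= K)%N ->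
  Pm hz m n x = \sum_(j < K) (if (m <= j)%N && (j < n)%N then coef hz x j else 0) *: z j.
Proof.
move=> hK; rewrite /Pm (sum_widen z (fun j => if (m <= j)%N then coef hz x j else 0) _ _ hK); apply: eq_bigr => j _.
by case: (m <= j)%N; case: (j < n)%N.
Qed.

Lemma P_comp {R : realType} {V : normedModType R} {z : nat -> V}
  (hz : is_basis z) a b m n x :
  Pm hz a b (Pm hz m n x) = Pm hz (maxn a m) (minn b n) x.
Proof.
rewrite (P_widen _ _ _ _ _ (leq_addr n b)) (P_widen _ _ _ _ _ (_ : minn b n <= b + n)%N);
  last by rewrite geq_min leq_addr.
rewrite coef_P; apply: eq_bigr => j _; rewrite geq_max leq_min.
by case: (a <= j)%N; case: (m <= j)%N; case: (j < b)%N; case: (j < n)%N.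
Qed.

Lemma P_empty {R : realType} {V : normedModType R} {z : nat -> V}
  (hz : is_basis z) m n x : (n <= m)%N -> Pm hz m n x = 0.
Proof.
move=> h; rewrite /Pm big1 // => j _.
have -> : (m <= j)%N = false by have := ltn_ord j; lia.
by rewrite scale0r.
Qed.

Lemma P_add {R : realType} {V : normedModType R} {z : nat -> V}
  (hz : is_basis z) a b c x : (a <= b)%N -> (b <= c)%N ->
  Pm hz a b x + Pm hz b c x = Pm hz a c x.
Proof.
move=> hab hbc; rewrite (P_widen _ _ _ _ _ (leqnn c)) (P_widen _ _ _ _ _ hbc).
rewrite (P_widen _ _ _ _ _ (leqnn c)) -big_split /=; apply: eq_bigr => -[j hj] _ /=.
rewrite -scalerDl; congr (_ *: _); move: hj.
have [hb|hb] := leqP b j.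
  have -> : (a <= j)%N by lia.
  by move=> _; rewrite /= add0r.
have -> : (j < c)%N = true by lia.
by move=> _; rewrite /= andbT addr0.
Qed.

Lemma P_bound {R : realType} {V : normedModType R} {z : nat -> V}
  (hz : is_basis z) (hb : bimonotone z) m n x : `|Pm hz m n x| <= `|x|.
Proof.
have [hmn|hnm] := ltnP m n; last by rewrite P_empty // normr0.
have := hb x _ (coefP hz x) m n.-1; rewrite prednK; last by lia.
rewrite big_geq_mkord /Pm big_mkcond /=.
have -> : \sum_(i < n) (if (m <= i)%N then coef hz x i *: z i else 0) =
  \sum_(j < n) (if (m <= j)%N then coef hz x j else 0) *: z j.
  by apply: eq_bigr => j _; case: ifP => _; rewrite ?scale0r.
apply; lia.
Qed.

Lemma P_single {R : realType} {V : normedModType R} {z : nat -> V}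
  (hz : is_basis z) j x : Pm hz j j.+1 x = coef hz x j *: z j.
Proof.
rewrite /Pm big_ord_recr /= leqnn big1 ?add0r // => i _.
have -> : (j <= i)%N = false by have := ltn_ord i; lia.
by rewrite scale0r.
Qed.

Lemma coef_bound {R : realType} {V : normedModType R} {z : nat -> V}
  (hz : is_basis z) (hb : bimonotone z) j x :
  `|coef hz x j| * `|z j| <= `|x|.
Proof. by rewrite -normrZ -P_single P_bound. Qed.

Lemma p_mono {p : nat -> nat} (hp : forall i, (p i < p i.+1)%N) i l :
  (i <= l)%N -> (p i <= p l)%N.
Proof.
move=> h; rewrite -(subnKC h); elim: (l - i)%N => [|k IH]; first by rewrite addn0.
by rewrite addnS; apply: leq_trans IH (ltnW (hp _)).
Qed.

Lemma w_fin {R : realType} {V : normedModType R} {z w : nat -> V}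
  {p : nat -> nat} {b : nat -> R}
  (hw : forall i, w i = \sum_(p i <= j < p i.+1) b j *: z j) l :
  w l = \sum_(j < p l.+1) (if (p l <= j)%N then b j else 0) *: z j.
Proof.
rewrite hw big_geq_mkord big_mkcond /=; apply: eq_bigr => j _.
by case: ifP; rewrite ?scale0r.
Qed.

Lemma coef_w {R : realType} {V : normedModType R} {z : nat -> V}
  (hz : is_basis z) {w : nat -> V} {p : nat -> nat} {b : nat -> R}
  (hw : forall i, w i = \sum_(p i <= j < p i.+1) b j *: z j) l :
  coef hz (w l) = (fun j => if (p l <= j)%N && (j < p l.+1)%N then b j else 0).
Proof.
rewrite (w_fin hw) (coef_fin hz (fun j => if (p l <= j)%N then b j else 0)); apply: funext => j.
by case: (p l <= j)%N; case: (j < p l.+1)%N.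
Qed.

Lemma Pw {R : realType} {V : normedModType R} {z : nat -> V}
  (hz : is_basis z) {w : nat -> V} {p : nat -> nat} {b : nat -> R}
  (hp : forall i, (p i < p i.+1)%N)
  (hw : forall i, w i = \sum_(p i <= j < p i.+1) b j *: z j) i k l :
  Pm hz (p i) (p k) (w l) = if (i <= l)%N && (l < k)%N then w l else 0.
Proof.
have hK : (p k <= p k + p l.+1)%N by rewrite leq_addr.
rewrite (P_widen _ _ _ _ _ hK) (coef_w hz hw).
have m1 := p_mono hp (l.+1) i; have m2 := p_mono hp k l; have m3 := p_mono hp i l;
have m4 := p_mono hp l.+1 k.
case: ifP => H.
  rewrite [in RHS](w_fin hw) (sum_widen z (fun j => if (p l <= j)%N then b j else 0) _ (p k + p l.+1)); last by rewrite leq_addl.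
  apply: eq_bigr => -[j hj] _ /=; congr (_ *: _).
  case hB: ((p l <= j)%N && (j < p l.+1)%N).
    have -> : ((p i <= j)%N && (j < p k)%N) = true by lia.
    by move: hB => /andP[-> ->].
  rewrite /= if_same.
  by case: ifP => // h; case: ifP => // h'; move: hB; rewrite h h'.
rewrite big1 // => -[j hj] _ /=.
case hB: ((p l <= j)%N && (j < p l.+1)%N); last by case: ifP => _; rewrite scale0r.
have -> : ((p i <= j)%N && (j < p k)%N) = false by lia.
by rewrite scale0r.
Qed.

Definition lin {R : realType} {V : normedModType R} (f : V -> V) :=
  forall (c : R) x y, f (c *: x + y) = c *: f x + f y.

Lemma lin0 {R : realType} {V : normedModType R} {f : V -> V} :
  lin f -> f 0 = 0.
Proof.
move=> lf; have h := lf 1 0 0; rewrite !scale1r addr0 in h.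
by apply: (addrI (f 0)); rewrite addr0 -h.
Qed.

Lemma linD {R : realType} {V : normedModType R} {f : V -> V} :
  lin f -> forall x y, f (x + y) = f x + f y.
Proof. by move=> lf x y; have := lf 1 x y; rewrite !scale1r. Qed.

Lemma linB {R : realType} {V : normedModType R} {f : V -> V} :
  lin f -> forall x y, f (x - y) = f x - f y.
Proof. by move=> lf x y; rewrite addrC -scaleN1r lf scaleN1r addrC. Qed.

Lemma lin_sum {R : realType} {V : normedModType R} {f : V -> V} :
  lin f -> forall (I : Type) (s : seq I) (a : I -> R) (u : I -> V),
  f (\sum_(i <- s) a i *: u i) = \sum_(i <- s) a i *: f (u i).
Proof.
move=> lf I s a u; elim: s => [|i s IH]; first by rewrite !big_nil lin0.
by rewrite !big_cons lf IH.
Qed.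

Lemma span_kill {R : realType} {V : normedModType R} (w : nat -> V)
  (f : V -> V) (K : R) : 0 < K -> lin f ->
  (forall x, `|f x| <= K * `|x|) -> (forall l, f (w l) = 0) ->
  forall x, closed_span w x -> f x = 0.
Proof.
move=> K0 lf hK hw0 x hx; apply/eqP; rewrite -normr_eq0 eq_le normr_ge0 andbT.
apply/ler_addgt0Pr => e e0; rewrite add0r.
have [y [[n [a ->]] hb]] := hx _ (nbhsx_ballx x (e / K) (divr_gt0 e0 K0)).
rewrite -ball_normE /ball_ /= in hb.
have fy : f (\sum_(i < n) a i *: w i) = 0.
  by rewrite lin_sum // big1 // => i _; rewrite hw0 scaler0.
rewrite -[x](subrK (\sum_(i < n) a i *: w i)) linD // fy addr0.
apply: le_trans (hK _) _.
by rewrite -ler_pdivlMl // mulrC; apply: ltW.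
Qed.

Definition SS {R : realType} {V : normedModType R} {z : nat -> V}
  (hz : is_basis z) (p : nat -> nat) (w : nat -> V) (C : R) (x : V) : set R :=
  [set r | exists i k, r = `|Pm hz (p i) (p k) x| / C] `|`
  [set r | exists i, r = `|Pm hz (p i) (p i.+1) x| / `|w i|].

Definition Nn {R : realType} {V : normedModType R} {z : nat -> V}
  (hz : is_basis z) (p : nat -> nat) (w : nat -> V) (C : R) (x : V) : R :=
  sup (SS hz p w C x).

Lemma div_le1 {R : realType} (a B c : R) : 0 <= a -> a <= B -> 1 <= c -> a / c <= B.
Proof.
move=> a0 aB c1; have c0 : 0 < c by apply: lt_le_trans c1.
rewrite ler_pdivrMr //; apply: le_trans (aB) _.
by rewrite ler_peMr // (le_trans a0 aB).
Qed.

Lemma P_scale {R : realType} {V : normedModType R} {z : nat -> V}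
  (hz : is_basis z) m n c x : Pm hz m n (c *: x) = c *: Pm hz m n x.
Proof.
have lP : lin (Pm hz m n) by move=> ? ? ?; exact: P_lin.
by rewrite -[c *: x]addr0 lP lin0 // addr0.
Qed.

Lemma SS_ub {R : realType} {V : normedModType R} {z : nat -> V}
  (hz : is_basis z) (hb : bimonotone z) p w (C : R) x :
  1 <= C -> (forall i, 1 <= `|w i|) -> forall r, SS hz p w C x r -> r <= `|x|.
Proof.
move=> hC hw1 r [[i [k ->]]|[i ->]]; apply: div_le1 => //; exact: P_bound.
Qed.

Lemma SS_ne {R : realType} {V : normedModType R} {z : nat -> V}
  (hz : is_basis z) p w (C : R) x : SS hz p w C x !=set0.
Proof. by exists (`|Pm hz (p 0%N) (p 0%N) x| / C); left; exists 0%N, 0%N. Qed.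

Lemma SS_sup {R : realType} {V : normedModType R} {z : nat -> V}
  (hz : is_basis z) (hb : bimonotone z) p w (C : R) x :
  1 <= C -> (forall i, 1 <= `|w i|) -> has_sup (SS hz p w C x).
Proof.
move=> hC hw1; split; first exact: SS_ne.
by exists `|x|; move=> r; apply: SS_ub.
Qed.

Lemma N_ge {R : realType} {V : normedModType R} {z : nat -> V}
  (hz : is_basis z) (hb : bimonotone z) p w (C : R) x r :
  1 <= C -> (forall i, 1 <= `|w i|) -> SS hz p w C x r -> r <= Nn hz p w C x.
Proof. by move=> hC hw1 h; apply: sup_upper_bound => //; apply: SS_sup. Qed.

Lemma N_le {R : realType} {V : normedModType R} {z : nat -> V}
  (hz : is_basis z) p w (C : R) x B :
  (forall r, SS hz p w C x r -> r <= B) -> Nn hz p w C x <= B.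
Proof. by move=> h; apply: ge_sup => //; apply: SS_ne. Qed.

Lemma N_ge0 {R : realType} {V : normedModType R} {z : nat -> V}
  (hz : is_basis z) (hb : bimonotone z) p w (C : R) x :
  1 <= C -> (forall i, 1 <= `|w i|) -> 0 <= Nn hz p w C x.
Proof.
move=> hC hw1; apply: le_trans (N_ge hz hb p w C x (`|Pm hz (p 0%N) (p 0%N) x| / C) hC hw1 _).
  by rewrite divr_ge0 // (le_trans ler01 hC).
by left; exists 0%N, 0%N.
Qed.

Lemma N_norm {R : realType} {V : normedModType R} {z : nat -> V}
  (hz : is_basis z) (hb : bimonotone z) p w (C : R) x :
  1 <= C -> (forall i, 1 <= `|w i|) -> Nn hz p w C x <= `|x|.
Proof. by move=> hC hw1; apply: N_le => r; apply: SS_ub. Qed.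

Lemma N_tri {R : realType} {V : normedModType R} {z : nat -> V}
  (hz : is_basis z) (hb : bimonotone z) p w (C : R) x y :
  1 <= C -> (forall i, 1 <= `|w i|) ->
  Nn hz p w C (x + y) <= Nn hz p w C x + Nn hz p w C y.
Proof.
move=> hC hw1; have lP : forall m n, lin (Pm hz m n) by move=> m n ? ? ?; exact: P_lin.
apply: N_le => r [[i [k ->]]|[i ->]]; rewrite linD //;
  (apply: le_trans (ler_wpM2r _ (ler_normD _ _)) _;
   [by rewrite invr_ge0 ?(le_trans ler01) ?normr_ge0 |
    rewrite mulrDl; apply: lerD; apply: N_ge => //]).
- by left; exists i, k.
- by left; exists i, k.
- by right; exists i.
- by right; exists i.
Qed.

Lemma N_scale_le {R : realType} {V : normedModType R} {z : nat -> V}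
  (hz : is_basis z) (hb : bimonotone z) p w (C : R) c x :
  1 <= C -> (forall i, 1 <= `|w i|) ->
  Nn hz p w C (c *: x) <= `|c| * Nn hz p w C x.
Proof.
move=> hC hw1; apply: N_le => r [[i [k ->]]|[i ->]];
  rewrite P_scale normrZ -mulrA; apply: ler_wpM2l => //; apply: N_ge => //.
- by left; exists i, k.
- by right; exists i.
Qed.

Lemma N_scale {R : realType} {V : normedModType R} {z : nat -> V}
  (hz : is_basis z) (hb : bimonotone z) p w (C : R) c x :
  1 <= C -> (forall i, 1 <= `|w i|) ->
  Nn hz p w C (c *: x) = `|c| * Nn hz p w C x.
Proof.
move=> hC hw1; have [->|c0] := eqVneq c 0.
  apply/eqP; rewrite normr0 mul0r eq_le N_ge0 // andbT.
  by have := N_scale_le hz hb p w C 0 x hC hw1; rewrite normr0 mul0r.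
apply/eqP; rewrite eq_le N_scale_le //=.
have := N_scale_le hz hb p w C c^-1 (c *: x) hC hw1.
rewrite scalerA mulVf // scale1r normrV ?unitfE // => h.
by rewrite -ler_pdivlMl ?normr_gt0 // mulrC.
Qed.

Lemma N_lowP {R : realType} {V : normedModType R} {z : nat -> V}
  (hz : is_basis z) (hb : bimonotone z) p w (C : R) x i k :
  1 <= C -> (forall i, 1 <= `|w i|) ->
  `|Pm hz (p i) (p k) x| <= C * Nn hz p w C x.
Proof.
move=> hC hw1; have C0 : 0 < C by apply: lt_le_trans hC.
rewrite -ler_pdivrMl // mulrC; apply: N_ge => //; by left; exists i, k.
Qed.

Lemma N_lowW {R : realType} {V : normedModType R} {z : nat -> V}
  (hz : is_basis z) (hb : bimonotone z) p w (C : R) x i :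
  1 <= C -> (forall i, 1 <= `|w i|) ->
  `|Pm hz (p i) (p i.+1) x| <= `|w i| * Nn hz p w C x.
Proof.
move=> hC hw1; have W0 : 0 < `|w i| by apply: lt_le_trans (hw1 i).
rewrite -ler_pdivrMl // mulrC; apply: N_ge => //; by right; exists i.
Qed.

Lemma single_sum {R : realType} {V : normedModType R} (w : nat -> V)
  (a : nat -> R) i n :
  \sum_(l < n) a l *: (if (i <= l)%N && (l < i.+1)%N then w l else 0) =
  if (i < n)%N then a i *: w i else 0.
Proof.
elim: n => [|n IH]; first by rewrite big_ord0.
rewrite big_ord_recr /= IH.
have [hin|hni] := ltnP i n.
  have -> : (i < n.+1)%N by lia.
  have -> : ((i <= n)%N && (n < i.+1)%N) = false by lia.
  by rewrite scaler0 addr0.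
have [->|hne] := eqVneq i n.
  by rewrite leqnn ltnSn /= add0r.
have -> : (i < n.+1)%N = false by lia.
have -> : ((i <= n)%N && (n < i.+1)%N) = false by lia.
by rewrite scaler0 addr0.
Qed.

Lemma recov {R : realType} {V : normedModType R} {z : nat -> V}
  (hz : is_basis z) (hb : bimonotone z) {w : nat -> V} {p : nat -> nat}
  {b : nat -> R} (hp : forall i, (p i < p i.+1)%N)
  (hw : forall i, w i = \sum_(p i <= j < p i.+1) b j *: z j) (C : R) a x :
  1 <= C -> (forall i, 1 <= `|w i|) ->
  series_to_N (Nn hz p w C) a w x ->
  forall i, a i *: w i = Pm hz (p i) (p i.+1) x.
Proof.
move=> hC hw1 hN i; apply/eqP; rewrite eq_sym -subr_eq0 -normr_eq0 eq_le normr_ge0 andbT.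
apply/ler_addgt0Pr => e e0; rewrite add0r.
have W0 : 0 < `|w i| by apply: lt_le_trans (hw1 i).
have [N0 _ HN] := (iffLR (cvgrPdist_lt _ _) hN) (e / `|w i|) (divr_gt0 e0 W0).
have := HN (maxn N0 i.+1) (leq_maxl _ _); rewrite /= sub0r normrN.
set n := maxn N0 i.+1.
have lP : lin (Pm hz (p i) (p i.+1)) by move=> ? ? ?; exact: P_lin.
have -> : Pm hz (p i) (p i.+1) x - a i *: w i =
    Pm hz (p i) (p i.+1) (x - \sum_(l < n) a l *: w l).
  rewrite (linB lP) (lin_sum lP).
  under eq_bigr do rewrite (Pw hz hp hw).
  by rewrite single_sum (_ : (i < n)%N) // /n; lia.
move=> h; apply: le_trans (N_lowW hz hb p w C _ i hC hw1) _.
rewrite -ler_pdivlMl // mulrC; apply: ltW; apply: le_lt_trans h.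
exact: ler_norm.
Qed.

Lemma tele {R : realType} {V : normedModType R} {z : nat -> V}
  (hz : is_basis z) {p : nat -> nat} (hp : forall i, (p i < p i.+1)%N) x m n :
  (m <= n)%N ->
  \sum_(m <= i < n) Pm hz (p i) (p i.+1) x = Pm hz (p m) (p n) x.
Proof.
elim: n => [|n IH] hmn.
  by move: hmn; rewrite leqn0 => /eqP ->; rewrite big_geq // P_empty.
have [->|hlt] := eqVneq m n.+1; first by rewrite big_geq // P_empty.
have hmn' : (m <= n)%N by lia.
rewrite big_nat_recr //= IH // P_add //; first exact: p_mono.
exact: ltnW.
Qed.

Lemma p_max {p : nat -> nat} (hp : forall i, (p i < p i.+1)%N) i j :
  maxn (p i) (p j) = p (maxn i j).
Proof.
have [h|h] := leqP i j.
  by rewrite (maxn_idPr (p_mono hp _ _ h)).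
by rewrite (maxn_idPl (p_mono hp _ _ (ltnW h))).
Qed.

Lemma p_min {p : nat -> nat} (hp : forall i, (p i < p i.+1)%N) i j :
  minn (p i) (p j) = p (minn i j).
Proof.
have [h|h] := leqP i j.
  by rewrite (minn_idPl (p_mono hp _ _ h)).
by rewrite (minn_idPr (p_mono hp _ _ (ltnW h))).
Qed.

Lemma N_mono {R : realType} {V : normedModType R} {z : nat -> V}
  (hz : is_basis z) (hb : bimonotone z) {p : nat -> nat}
  (hp : forall i, (p i < p i.+1)%N) w (C : R) x m k :
  1 <= C -> (forall i, 1 <= `|w i|) ->
  Nn hz p w C (Pm hz (p m) (p k) x) <= Nn hz p w C x.
Proof.
move=> hC hw1; apply: N_le => r [[i [k' ->]]|[i ->]];
  rewrite P_comp (p_max hp) (p_min hp).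
  by apply: N_ge => //; left; exists (maxn i m), (minn k' k).
have [hin|hni] := boolP ((m <= i)%N && (i < k)%N).
  have -> : maxn i m = i by lia.
  have -> : minn i.+1 k = i.+1 by lia.
  by apply: N_ge => //; right; exists i.
rewrite P_empty ?normr0 ?mul0r; first exact: N_ge0.
apply: p_mono => //; lia.
Qed.

Lemma w_self {R : realType} {V : normedModType R} {z : nat -> V}
  (hz : is_basis z) {w : nat -> V} {p : nat -> nat} {b : nat -> R}
  (hp : forall i, (p i < p i.+1)%N)
  (hw : forall i, w i = \sum_(p i <= j < p i.+1) b j *: z j) l :
  Pm hz (p l) (p l.+1) (w l) = w l.
Proof. by rewrite (Pw hz hp hw) leqnn ltnSn. Qed.

Lemma G1 {R : realType} {V : normedModType R} {z : nat -> V}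
  (hz : is_basis z) (hb : bimonotone z) {w : nat -> V} {p : nat -> nat}
  {b : nat -> R} (hp : forall i, (p i < p i.+1)%N)
  (hw : forall i, w i = \sum_(p i <= j < p i.+1) b j *: z j) x :
  closed_span w x -> Pm hz 0 (p 0%N) x = 0.
Proof.
move: x; apply: (span_kill w _ 1) => //.
- by move=> ? ? ?; exact: P_lin.
- by move=> y; rewrite mul1r P_bound.
- move=> l; rewrite -(w_self hz hp hw l) P_comp P_empty //.
  have := p_mono hp 0 l (leq0n l); lia.
Qed.

Lemma G2 {R : realType} {V : normedModType R} {z : nat -> V}
  (hz : is_basis z) (hb : bimonotone z) {w : nat -> V} {p : nat -> nat}
  {b : nat -> R} (hp : forall i, (p i < p i.+1)%N)
  (hw : forall i, w i = \sum_(p i <= j < p i.+1) b j *: z j) (jj : nat -> nat)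
  (hj : forall i, ((p i <= jj i)%N && (jj i < p i.+1)%N) /\ b (jj i) != 0) x i :
  closed_span w x ->
  Pm hz (p i) (p i.+1) x = (coef hz x (jj i) / b (jj i)) *: w i.
Proof.
move=> hx; apply/eqP; rewrite -subr_eq0; apply/eqP; move: x hx.
have bj0 := (hj i).2; have zj0 := z_neq0 hz (jj i).
have bjn : 0 < `|b (jj i)| by rewrite normr_gt0.
have zjn : 0 < `|z (jj i)| by rewrite normr_gt0.
apply: (span_kill w (fun x => Pm hz (p i) (p i.+1) x - (coef hz x (jj i) / b (jj i)) *: w i) (1 + `|w i| / (`|b (jj i)| * `|z (jj i)|))).
- by rewrite ltr_pwDl // divr_ge0 // mulr_ge0 // ltW.
- move=> c x y; rewrite P_lin coefL mulrDl scalerDl -mulrA -scalerA.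
  rewrite opprD addrACA -scalerBr.
  by congr (_ + _); rewrite scalerBr.
- move=> y; apply: le_trans (ler_normB _ _) _; rewrite mulrDl mul1r.
  apply: lerD; first exact: P_bound.
  rewrite normrZ normrM normrV ?unitfE //.
  have hc : `|coef hz y (jj i)| <= `|y| / `|z (jj i)|.
    by rewrite ler_pdivlMr // coef_bound.
  apply: le_trans (_ : `|y| / `|z (jj i)| / `|b (jj i)| * `|w i| <= _).
    apply: ler_wpM2r => //; apply: ler_wpM2r => //; by rewrite invr_ge0 ltW.
  rewrite invfM !mulrA le_eqVlt; apply/orP; left; apply/eqP.
  ring.
- move=> l; rewrite (Pw hz hp hw) (coef_w hz hw).
  have [->|hne] := eqVneq l i.
    by rewrite leqnn ltnSn (hj i).1 divff // scale1r subrr.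
  have m1 := p_mono hp (l.+1) i; have m2 := p_mono hp i.+1 l; have h1 := (hj i).1.
  have -> : ((i <= l)%N && (l < i.+1)%N) = false by lia.
  have -> : ((p l <= jj i)%N && (jj i < p l.+1)%N) = false by lia.
  by rewrite mul0r scale0r subrr.
Qed.

Lemma p_ge {p : nat -> nat} (hp : forall i, (p i < p i.+1)%N) n : (n <= p n)%N.
Proof. elim: n => [//|n IH]; exact: leq_ltn_trans IH (hp n). Qed.

Lemma P0sum {R : realType} {V : normedModType R} {z : nat -> V}
  (hz : is_basis z) k x : Pm hz 0 k x = \sum_(j < k) coef hz x j *: z j.
Proof. by []. Qed.

Lemma part_sum {R : realType} {V : normedModType R} {z : nat -> V}
  (hz : is_basis z) (hb : bimonotone z) {w : nat -> V} {p : nat -> nat}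
  {b : nat -> R} (hp : forall i, (p i < p i.+1)%N)
  (hw : forall i, w i = \sum_(p i <= j < p i.+1) b j *: z j) (jj : nat -> nat)
  (hj : forall i, ((p i <= jj i)%N && (jj i < p i.+1)%N) /\ b (jj i) != 0) x n :
  closed_span w x ->
  \sum_(i < n) (coef hz x (jj i) / b (jj i)) *: w i = Pm hz 0 (p n) x.
Proof.
move=> hx.
have -> : \sum_(i < n) (coef hz x (jj i) / b (jj i)) *: w i =
    \sum_(i < n) Pm hz (p i) (p i.+1) x.
  by apply: eq_bigr => i _; rewrite (G2 hz hb hp hw jj hj).
rewrite -(big_mkord xpredT (fun i => Pm hz (p i) (p i.+1) x)) tele //.
by rewrite -(P_add hz 0 (p 0%N) (p n) x (leq0n _) (p_mono hp _ _ (leq0n n))) (G1 hz hb hp hw) // add0r.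
Qed.

Lemma exist_series {R : realType} {V : normedModType R} {z : nat -> V}
  (hz : is_basis z) (hb : bimonotone z) {w : nat -> V} {p : nat -> nat}
  {b : nat -> R} (hp : forall i, (p i < p i.+1)%N)
  (hw : forall i, w i = \sum_(p i <= j < p i.+1) b j *: z j) (jj : nat -> nat)
  (hj : forall i, ((p i <= jj i)%N && (jj i < p i.+1)%N) /\ b (jj i) != 0)
  (C : R) x :
  1 <= C -> (forall i, 1 <= `|w i|) -> closed_span w x ->
  series_to_N (Nn hz p w C) (fun i => coef hz x (jj i) / b (jj i)) w x.
Proof.
move=> hC hw1 hx; apply/cvgrPdist_lt => e e0.
have [N0 _ HN] := (iffLR (cvgrPdist_lt _ _) (coefP hz x)) e e0.
exists N0 => // n hn /=.
rewrite (part_sum hz hb hp hw jj hj) // P0sum sub0r normrN.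
rewrite ger0_norm; last exact: N_ge0.
apply: le_lt_trans (N_norm hz hb p w C _ hC hw1) _.
exact: HN (leq_trans hn (p_ge hp n)).
Qed.

Lemma lower_bd {R : realType} {V : normedModType R} {z : nat -> V}
  (hz : is_basis z) (hb : bimonotone z) {w : nat -> V} {p : nat -> nat}
  {b : nat -> R} (hp : forall i, (p i < p i.+1)%N)
  (hw : forall i, w i = \sum_(p i <= j < p i.+1) b j *: z j)
  (C : R) x :
  1 <= C -> (forall i, 1 <= `|w i|) -> closed_span w x ->
  `|x| <= C * Nn hz p w C x.
Proof.
move=> hC hw1 hx; apply/ler_addgt0Pr => e e0.
have [N0 _ HN] := (iffLR (cvgrPdist_lt _ _) (coefP hz x)) e e0.
have := HN (p N0) (p_ge hp N0); rewrite /= -P0sum => hlt.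
have -> : `|x| = `|(x - Pm hz 0 (p N0) x) + Pm hz 0 (p N0) x| by rewrite subrK.
apply: le_trans (ler_normD _ _) _.
rewrite addrC; apply: lerD; last exact: ltW.
rewrite -(P_add hz 0 (p 0%N) (p N0) x (leq0n _) (p_mono hp _ _ (leq0n N0))).
rewrite (G1 hz hb hp hw) // add0r; exact: (N_lowP hz hb p w C x 0 N0 hC hw1).
Qed.

Lemma sgn_norm {R : realType} (c : bool) : `|((-1) ^+ c : R)| = 1.
Proof. by case: c; rewrite ?expr0 ?expr1 ?normrN normr1. Qed.

Lemma P_signed {R : realType} {V : normedModType R} {z : nat -> V}
  (hz : is_basis z) {w : nat -> V} {p : nat -> nat} {b : nat -> R}
  (hp : forall i, (p i < p i.+1)%N)
  (hw : forall i, w i = \sum_(p i <= j < p i.+1) b j *: z j)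
  (F : {fset nat}) (s : nat -> bool) i k :
  Pm hz (p i) (p k) (signed_sum w F s) =
  \sum_(l <- F) ((-1) ^+ s l : R) *: (if (i <= l)%N && (l < k)%N then w l else 0).
Proof.
have lP : lin (Pm hz (p i) (p k)) by move=> ? ? ?; exact: P_lin.
rewrite /signed_sum (lin_sum lP); apply: eq_bigr => l _.
by rewrite (Pw hz hp hw).
Qed.

Lemma hered {R : realType} {V : normedModType R} (w : nat -> V) (C : R)
  (F : {fset nat}) :
  (forall s, `|signed_sum w F s| <= C) ->
  forall (P : pred nat) (s : nat -> bool),
  `|\sum_(l <- F) ((-1) ^+ s l : R) *: (if P l then w l else 0)| <= C.
Proof.
move=> hF P s; set T := \sum_(l <- F) _.
pose s2 := fun l => if P l then s l else ~~ s l.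
have E : (2 : R) *: T = signed_sum w F s + signed_sum w F s2.
  rewrite /signed_sum -big_split scaler_sumr /=; apply: eq_bigr => l _.
  rewrite /s2; case: (P l); case: (s l) => /=.
  - by rewrite scaler_nat mulr2n.
  - by rewrite scaler_nat mulr2n.
  - by rewrite !scaler0 expr1 expr0 scaleN1r scale1r addNr.
  - by rewrite !scaler0 expr1 expr0 scaleN1r scale1r subrr.
have h2 : `|(2 : R) *: T| <= C + C by rewrite E; apply: le_trans (ler_normD _ _) _; apply: lerD.
rewrite normrZ ger0_norm // -mulr2n -[C *+ 2]mulr_natl in h2.
by rewrite -(ler_pM2l (_ : (0 : R) < 2)).
Qed.

Lemma S2_signed {R : realType} {V : normedModType R} {z : nat -> V}
  (hz : is_basis z) {w : nat -> V} {p : nat -> nat} {b : nat -> R}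
  (hp : forall i, (p i < p i.+1)%N)
  (hw : forall i, w i = \sum_(p i <= j < p i.+1) b j *: z j)
  (F : {fset nat}) (s : nat -> bool) i :
  Pm hz (p i) (p i.+1) (signed_sum w F s) =
  if i \in F then ((-1) ^+ s i : R) *: w i else 0.
Proof.
rewrite (P_signed hz hp hw).
have E : forall l, ((i <= l)%N && (l < i.+1)%N) = (l == i).
  by move=> l; apply/idP/eqP; lia.
under eq_bigr do rewrite E.
case: ifP => hi.
  rewrite (bigD1_seq i) //= ?fset_uniq // eqxx big1 ?addr0 // => l /negbTE ->.
  by rewrite scaler0.
rewrite big1_seq // => l /andP[_ hl].
have -> : (l == i) = false by apply/eqP => hli; move: hi; rewrite -hli hl.
by rewrite scaler0.
Qed.

Lemma N_signed {R : realType} {V : normedModType R} {z : nat -> V}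
  (hz : is_basis z) (hb : bimonotone z) {w : nat -> V} {p : nat -> nat}
  {b : nat -> R} (hp : forall i, (p i < p i.+1)%N)
  (hw : forall i, w i = \sum_(p i <= j < p i.+1) b j *: z j) (C : R)
  (F : {fset nat}) :
  1 <= C -> (forall i, 1 <= `|w i|) -> F != fset0 ->
  (forall s : nat -> bool, `|signed_sum w F s| <= C) ->
  forall s : nat -> bool, Nn hz p w C (signed_sum w F s) = 1.
Proof.
move=> hC hw1 hF hS s; have C0 : 0 < C by apply: lt_le_trans hC.
apply/eqP; rewrite eq_le; apply/andP; split.
  apply: N_le => r [[i [k ->]]|[i ->]].
    rewrite (P_signed hz hp hw) ler_pdivrMr // mul1r.
    exact: (hered w C F hS (fun l => (i <= l)%N && (l < k)%N)).
  rewrite (S2_signed hz hp hw); case: ifP => _.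
    rewrite normrZ sgn_norm mul1r divff //.
    by apply: lt0r_neq0; apply: lt_le_trans (hw1 i).
  by rewrite normr0 mul0r ler01.
have [i hi] := fset0Pn F hF.
apply: (N_ge hz hb p w C _ _ hC hw1); right; exists i.
rewrite (S2_signed hz hp hw) hi normrZ sgn_norm mul1r divff //.
by apply: lt0r_neq0; apply: lt_le_trans (hw1 i).
Qed.

Theorem mainTheorem9 (R : realType) (V : completeNormedModType R)
  (C : R) (z w : nat -> V) :
  is_basis z -> bimonotone z ->
  block_basis_of w z ->
  (forall i, 1 <= `|w i| /\ `|w i| <= C) ->
  exists N : V -> R,
    is_norm_on (closed_span w) N /\
    equiv_norm_on (closed_span w) N /\
    (forall i, N (w i) = 1) /\
    (forall x, closed_span w x -> exists! a : nat -> R, series_to_N N a w x) /\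
    (forall x (a : nat -> R), closed_span w x -> series_to_N N a w x ->
       forall m n : nat, (m <= n)%N ->
         N (\sum_(m <= i < n.+1) a i *: w i) <= N x) /\
    (forall F : {fset nat}, F != fset0 ->
       (forall s : nat -> bool, `|signed_sum w F s| <= C) ->
       forall s : nat -> bool, N (signed_sum w F s) = 1).
Proof.
move=> hz hb [p [b [hp [hw hw0]]]] hwC.
have hw1 : forall i, 1 <= `|w i| by move=> i; case: (hwC i).
have hC : 1 <= C by case: (hwC 0%N) => h1 h2; apply: le_trans h1 h2.
have C0 : 0 < C by apply: lt_le_trans hC.
have hex : forall i, exists j, ((p i <= j)%N && (j < p i.+1)%N) /\ b j != 0.
  move=> i.
  case: (boolp.pselect (exists j, ((p i <= j)%N && (j < p i.+1)%N) /\ b j != 0)) => // H.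
  exfalso; move/negP: (hw0 i); apply; rewrite hw big1_seq //= => j hjm.
  rewrite mem_index_iota in hjm.
  have -> : b j = 0.
    by apply/eqP; apply/negPn/negP => hb0; apply: H; exists j; split.
  by rewrite scale0r.
have [jj hj] := boolp.choice hex.
exists (Nn hz p w C).
split.
  split; first by move=> x _; exact: N_ge0.
  split.
    move=> x hx h0; have := lower_bd hz hb hp hw C x hC hw1 hx.
    rewrite h0 mulr0 => h; apply/eqP; rewrite -normr_eq0 eq_le h normr_ge0 //.
  split; first by move=> x y _ _; exact: N_tri.
  by move=> c x _; exact: N_scale.
split.
  exists C^-1, 1; split; first by rewrite invr_gt0.
  split; first exact: ltr01.
  move=> x hx; split; last by rewrite mul1r; exact: N_norm.
  by rewrite mulrC ler_pdivrMr // mulrC; exact: lower_bd.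
split.
  move=> i.
  have E : signed_sum w [fset i]%fset (fun _ => false) = w i.
    by rewrite /signed_sum big_seq_fset1 expr0 scale1r.
  rewrite -E; apply: (N_signed hz hb hp hw) => //.
    by apply/fset0Pn; exists i; rewrite inE.
  move=> s; rewrite /signed_sum big_seq_fset1 normrZ sgn_norm mul1r.
  by case: (hwC i).
split.
  move=> x hx; exists (fun i => coef hz x (jj i) / b (jj i)); split.
    exact: (exist_series hz hb hp hw jj hj).
  move=> a' ha'; apply: funext => i.
  have h1 := recov hz hb hp hw C _ x hC hw1 (exist_series hz hb hp hw jj hj C x hC hw1 hx) i.
  have h2 := recov hz hb hp hw C _ x hC hw1 ha' i.
  move: h1; rewrite -h2 => /eqP; rewrite -subr_eq0 -scalerBl scaler_eq0.
  by rewrite (negbTE (hw0 i)) orbF subr_eq0 => /eqP.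
split.
  move=> x a hx ha m n hmn.
  have -> : \sum_(m <= i < n.+1) a i *: w i = \sum_(m <= i < n.+1) Pm hz (p i) (p i.+1) x.
    by apply: eq_bigr => i _; exact: (recov hz hb hp hw C a x hC hw1 ha).
  rewrite (tele hz hp) //; last exact: leqW.
  exact: N_mono.
move=> F hF hS s; exact: (N_signed hz hb hp hw).
Qed.
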